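(* Let $i\in\mathbb{N}=\{0,1,2,\dots\}$ and let $w\in\{0,1\}^*$ be a $\frac{7}{3}$-power-free word with $|w|=5\cdot 2^i-1$. Let $a\in\{0,1\}$. Then the word $waw$ has a subword $x$ with $|x|\leq 5\cdot 2^i$ such that $x$ is a $\beta$-power for some rational $\beta\ge\frac{7}{3}$.
   Context: A word $w'$ is a subword of $w$ if $w=uw'v$ for some words $u,v$. For a rational $\beta\ge 1$, a $\beta$-power is a word of the form $y^ny'$ with $y$ a nonempty word, $y'$ a prefix of $y$, $n$ a nonnegative integer and $n+|y'|/|y|=\beta$. A word is $\alpha$-power-free if none of its subwords is a $\beta$-power for any rational $\beta\geq\alpha$. *)

(* Defs.v *)
From mathcomp Require Import all_boot all_order all_algebra.
Set Implicit Arguments. Unset Strict Implicit. Unset Printing Implicit Defensive.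
Import Order.TTheory GRing.Theory Num.Theory.

Definition subword (x w : seq bool) : Prop :=
  exists u v, w = u ++ x ++ v.

Definition is_beta_power (x : seq bool) (beta : rat) : Prop :=
  exists (y y' : seq bool) (n : nat),
    y != [::] /\ prefix y' y /\ x = flatten (nseq n y) ++ y' /\
    beta = (n%:R + (size y')%:R / (size y)%:R)%R.

Definition power_free (alpha : rat) (w : seq bool) : Prop :=
  forall x, subword x w -> forall beta : rat, (alpha <= beta)%R -> ~ is_beta_power x beta.

(* Main.v *)
Require Import Defs.
From mathcomp Require Import all_boot all_order all_algebra.
From mathcomp Require Import zify.
From Stdlib Require Import Classical.
Import Order.TTheory GRing.Theory Num.Theory.

Definition spow (s : nat -> bool) K := exists j L p, 0 < p /\ L <= K /\ 7 * p <= 3 * L /\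
  forall k, k + p < L -> s (j + k) = s (j + k + p).

Definition powat (f : nat -> bool) j L p :=
  (0 < p) && (7 * p <= 3 * L) && all (fun k => f (j + k) == f (j + k + p)) (iota 0 (L - p)).

Definition freeW f W := all (fun j => all (fun L => all (fun p => ~~ powat f j L p)
   (iota 0 (L + 1))) (iota 0 (W - j + 1))) (iota 0 W).

Definition spowb f K R := has (fun j => has (fun L => has (fun p => powat f j L p)
   (iota 0 (L + 1))) (iota 0 (K + 1))) (iota 0 R).

Fixpoint allwords n : seq (seq bool) :=
  if n is n'.+1 then flatten [seq [:: true :: u; false :: u] | u <- allwords n'] else [:: [::]].

Lemma allwordsP n u : size u = n -> u \in allwords n.
Proof.
elim: n u => [|n IH] [|b u] //= [] /IH hu.
apply/flattenP; exists [:: true :: u; false :: u]; first exact: map_f.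
by case: b; rewrite !inE eqxx ?orbT.
Qed.

Definition chk (u : seq bool) := let f := nth false u in
  freeW f 9 ==> [&& ~~ ((f 1 == f 2) && (f 2 == f 3)), ~~ ((f 1 == f 2) && (f 4 == f 5)),
    ~~ ((f 1 == f 2) && (f 6 == f 7)) & [|| f 1 == f 2, f 2 == f 3, f 3 == f 4 | f 4 == f 5]].

Lemma chk_all : all chk (allwords 9).
Proof. by vm_compute. Qed.

Lemma base_all : all (fun u => spowb (fun k => nth false u (k %% 5)) 5 5) (allwords 5).
Proof. by vm_compute. Qed.

Lemma spowbP f K R : spowb f K R -> spow f K.
Proof.
case/hasP => j _ /hasP [L]; rewrite mem_iota => /andP [_ hL] /hasP [p _].
case/andP => /andP [p0 h7] /allP hall.
exists j, L, p; split => //; split; first lia. split => // k hk.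
apply/eqP/hall; rewrite mem_iota; lia.
Qed.

Definition per (s : nat -> bool) N := forall k, s (k + N) = s k.

Lemma per_mul s N k q : per s N -> s (k + q * N) = s k.
Proof.
move=> hs; elim: q => [|q IH]; first by rewrite mul0n addn0.
by rewrite mulSn addnCA addnC hs.
Qed.

Lemma per_mod s N k : per s N -> s k = s (k %% N).
Proof. by move=> hs; rewrite {1}(divn_eq k N) addnC per_mul. Qed.

Lemma window s K m : 9 <= K -> ~ spow s K ->
  [/\ s (m+1) = s (m+2) -> s (m+2) <> s (m+3),
      s (m+1) = s (m+2) -> s (m+4) <> s (m+5),
      s (m+1) = s (m+2) -> s (m+6) <> s (m+7) &
      [\/ s (m+1) = s (m+2), s (m+2) = s (m+3), s (m+3) = s (m+4) | s (m+4) = s (m+5)]].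
Proof.
move=> hK nH.
set u := mkseq (fun k => s (m + k)) 9.
have hu : u \in allwords 9 by apply: allwordsP; rewrite size_mkseq.
have := allP chk_all u hu; rewrite /chk.
have -> : freeW (nth false u) 9.
  apply/allP => j; rewrite mem_iota => /andP [_ hj].
  apply/allP => L; rewrite mem_iota => /andP [_ hL].
  apply/allP => p _; apply/negP => /andP [/andP [p0 h7] /allP hall].
  apply: nH; exists (m + j), L, p; split => //; split; first lia; split => // k hk.
  have := hall k; rewrite mem_iota => /(_ ltac:(lia)) /eqP.
  rewrite !nth_mkseq; try lia. by rewrite !addnA.
rewrite /= => /and4P [/negP h1 /negP h2 /negP h3 h4]; split.
- by move=> e1 e2; apply: h1; rewrite e1 e2 eqxx.
- by move=> e1 e2; apply: h2; rewrite e1 e2 !eqxx.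
- by move=> e1 e2; apply: h3; rewrite e1 e2 !eqxx.
- by case/or4P: h4 => /eqP; [constructor 1|constructor 2|constructor 3|constructor 4].
Qed.


Lemma sE2 (s : nat -> bool) a b a' b' : s a' = s b' -> a' = a -> b' = b -> s a = s b.
Proof. by move=> h <- <-. Qed.
Arguments sE2 {s a b a' b'}.

Ltac li := repeat match goal with
 | H : @eq bool _ _ |- _ => clear H
 | H : _ -> _ |- _ => clear H
 | H : forall _, _ |- _ => clear H
 end; lia.

Lemma parity s K : 9 <= K -> ~ spow s K -> forall n d, 1 <= d ->
  s d = s (d + 1) -> s (d + n) = s (d + n + 1) -> ~~ odd n.
Proof.
move=> hK nH n; elim/ltn_ind: n => n IH d d1 hd hdn.
have [A1 A3 A5 _] := window _ _ (d - 1) hK nH.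
have hd' : s (d - 1 + 1) = s (d - 1 + 2) by apply: (sE2 hd); li.
have small : n = 1 \/ n = 3 \/ n = 5 -> False.
  case=> [e|[e|e]]; subst n.
  - by apply: (A1 hd'); apply: (sE2 hdn); li.
  - by apply: (A3 hd'); apply: (sE2 hdn); li.
  - by apply: (A5 hd'); apply: (sE2 hdn); li.
have [B1|B2|B3|B4] : [\/ s (d+1) = s (d+2), s (d+2) = s (d+3), s (d+3) = s (d+4) | s (d+4) = s (d+5)].
- have [_ _ _ W] := window _ _ d hK nH; exact: W.
- by exfalso; apply: (A1 hd'); apply: (sE2 B1); li.
- have hn : 6 <= n \/ n = 2 \/ n = 4 \/ n = 1 \/ n = 3 \/ n = 5 \/ n = 0 by li.
  case: hn => [hn|[->|[->|hn]]] //; last by case: hn => [e|[e|[e|->]]] //; exfalso; apply: small; tauto.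
  have := IH (n - 2) ltac:(li) (d + 2) ltac:(li).
  move=> /(_ ltac:(apply: (sE2 B2); li) ltac:(apply: (sE2 hdn); li)).
  have e : n = (n - 2) + 2 by li.
  by rewrite {2}e oddD /= addbF.
- by exfalso; apply: (A3 hd'); apply: (sE2 B3); li.
- have hn : 6 <= n \/ n = 2 \/ n = 4 \/ n = 1 \/ n = 3 \/ n = 5 \/ n = 0 by li.
  case: hn => [hn|[->|[->|hn]]] //; last by case: hn => [e|[e|[e|->]]] //; exfalso; apply: small; tauto.
  have := IH (n - 4) ltac:(li) (d + 4) ltac:(li).
  move=> /(_ ltac:(apply: (sE2 B4); li) ltac:(apply: (sE2 hdn); li)).
  have e : n = (n - 4) + 4 by li.
  by rewrite {2}e oddD /= addbF.
Qed.

Lemma betaok (n r p : nat) : 0 < p -> 7 * p <= 3 * (n * p + r) ->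
  (7%:R / 3%:R <= n%:R + r%:R / p%:R :> rat)%R.
Proof.
move=> p0 h.
have -> : (n%:R + r%:R / p%:R = (n * p + r)%:R / p%:R :> rat)%R.
  by rewrite natrD natrM mulrDl mulfK // pnatr_eq0 -lt0n.
rewrite ler_pdivlMr ?ltr0n // mulrAC ler_pdivrMr ?ltr0n // -!natrM ler_nat.
lia.
Qed.

Lemma fl (p r : nat) (y : seq bool) : 0 < p -> size y = p -> r <= p ->
  forall n x, size x = n * p + r ->
  (forall k, k < size x -> nth false x k = nth false y (k %% p)) ->
  x = flatten (nseq n y) ++ take r y.
Proof.
move=> p0 sy rp; elim=> [|n IH] x sx hx.
  rewrite mul0n add0n in sx; rewrite /=.
  apply: (@eq_from_nth _ false); first by rewrite size_takel ?sy.
  move=> k hk; rewrite nth_take; last by lia.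
  by rewrite hx // modn_small //; lia.
rewrite -(cat_take_drop p x) /= -catA; congr (_ ++ _).
  apply: (@eq_from_nth _ false); first by rewrite size_takel ?sy //; lia.
  move=> k; rewrite size_takel => [hk|]; last by lia.
  by rewrite nth_take // hx ?modn_small //; lia.
apply: IH; first by rewrite size_drop sx mulSn; lia.
move=> k; rewrite size_drop => hk; rewrite nth_drop hx; last by lia.
by rewrite modnDl.
Qed.

Lemma permod (g : nat -> bool) L p : 0 < p -> (forall k, k + p < L -> g k = g (k + p)) ->
  forall k, k < L -> g k = g (k %% p).
Proof.
move=> p0 h k; elim/ltn_ind: k => k IH hk.
case: (ltnP k p) => hkp; first by rewrite modn_small.
have e : k = (k - p) + p by lia.
rewrite e -h; last by lia.
rewrite IH; try lia.
by rewrite modnDr.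
Qed.


Lemma main i : forall s, per s (5 * 2 ^ i) -> spow s (5 * 2 ^ i).
Proof.
elim: i => [|i IH] s hs.
  rewrite expn0 muln1 in hs *.
  set u := mkseq s 5.
  have hu : u \in allwords 5 by apply: allwordsP; rewrite size_mkseq.
  have := allP base_all u hu => /spowbP [j [L [p [h1 [h2 [h3 h4]]]]]].
  exists j, L, p; split => //; split => //; split => // k hk.
  have := h4 k hk; rewrite !nth_mkseq ?ltn_pmod // -!(per_mod s 5 _ hs) //.
set N := 5 * 2 ^ i.
have eN : 5 * 2 ^ i.+1 = N * 2 by rewrite /N expnS; li.
rewrite eN in hs *.
have N5 : 5 <= N by rewrite /N; have := expn_gt0 2 i; li.
case: (classic (spow s (N * 2))) => // nH.
have hK : 9 <= N * 2 by li.
have [_ _ _ W0] := window s (N * 2) 0 hK nH.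
have [j0 [hj0 dj0]] : exists j0, 1 <= j0 <= 4 /\ s j0 = s (j0 + 1).
  case: W0 => h; [exists 1|exists 2|exists 3|exists 4]; split => //; apply: (sE2 h); li.
set e := j0 + 1.
have alt : forall k, s (2 * k + e + 1) = ~~ s (2 * k + e).
  move=> k; case E: (s (2 * k + e + 1)); case F: (s (2 * k + e)) => //=; exfalso.
  - have := parity s (N * 2) hK nH (2 * k + 1 + N * 2) j0 ltac:(li) dj0.
    have -> : j0 + (2 * k + 1 + N * 2) = 2 * k + e + N * 2 by rewrite /e; li.
    have -> : 2 * k + e + N * 2 + 1 = 2 * k + e + 1 + N * 2 by li.
    rewrite !hs E F => /(_ erefl).
    by rewrite !oddD !oddM /= andbF; case: (odd k).
  - have := parity s (N * 2) hK nH (2 * k + 1 + N * 2) j0 ltac:(li) dj0.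
    have -> : j0 + (2 * k + 1 + N * 2) = 2 * k + e + N * 2 by rewrite /e; li.
    have -> : 2 * k + e + N * 2 + 1 = 2 * k + e + 1 + N * 2 by li.
    rewrite !hs E F => /(_ erefl).
    by rewrite !oddD !oddM /= andbF; case: (odd k).
pose t k := s (2 * k + e).
have ht : per t N.
  move=> k; rewrite /t.
  have -> : 2 * (k + N) + e = 2 * k + e + N * 2 by li.
  by rewrite hs.
have [j [L [p [p0 [hL [h7 hper]]]]]] := IH t ht.
exists (2 * j + e), (2 * L), (2 * p).
split; first li. split; first li. split; first li.
move=> k hk.
have [q [r [hr ek]]] : exists q r, r < 2 /\ k = 2 * q + r.
  exists k./2, (odd k); split; first by case: odd.
  by rewrite -{1}(odd_double_half k) -mul2n addnC.
subst k.
have hq : q + p < L by li.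
have := hper q hq; rewrite /t => hq'.
case: r hr hk => [|[|r]] // _ hk.
  by apply: (sE2 hq'); li.
have -> : 2 * j + e + (2 * q + 1) + 2 * p = 2 * (j + q + p) + e + 1 by li.
have -> : 2 * j + e + (2 * q + 1) = 2 * (j + q) + e + 1 by li.
rewrite !alt; congr (~~ _); apply: (sE2 hq'); li.
Qed.


Theorem lemma6 (i : nat) (w : seq bool) (a : bool) :
  power_free (7%:R / 3%:R)%R w ->
  size w = 5 * 2 ^ i - 1 ->
  exists x : seq bool,
    subword x (w ++ a :: w) /\ size x <= 5 * 2 ^ i /\
    exists beta : rat, (7%:R / 3%:R <= beta)%R /\ is_beta_power x beta.
Proof.
move=> _ hw.
set N := 5 * 2 ^ i in hw *.
have N5 : 5 <= N by rewrite /N; have := expn_gt0 2 i; li.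
set c := rcons w a.
have sc : size c = N by rewrite size_rcons hw; li.
pose s k := nth false c (k %% N).
have hs : per s N by move=> k; rewrite /s modnDr.
have [j [L [p [p0 [hL [h7 hper]]]]]] := main i s hs.
set z := w ++ a :: w.
have ez : z = c ++ w by rewrite /z /c cat_rcons.
have sz : size z = N * 2 - 1 by rewrite ez size_cat sc hw; li.
have nz : forall k, k < N * 2 - 1 -> nth false z k = s k.
  move=> k hk; rewrite ez nth_cat sc /s.
  case: (ltnP k N) => hkN; first by rewrite modn_small.
  have -> : k %% N = k - N.
    by rewrite -{1}(subnK hkN) modnDr modn_small //; li.
  by rewrite /c -cats1 nth_cat hw ifT //; li.
set j' := j %% N.
have hj' : j' < N by rewrite ltn_pmod //; li.
have hsj : forall k, s (j + k) = s (j' + k).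
  by move=> k; rewrite /s /j' modnDml.
set x := take L (drop j' z).
have sx : size x = L by rewrite size_takel // size_drop sz; li.
have nx : forall k, k < L -> nth false x k = s (j' + k).
  by move=> k hk; rewrite nth_take // nth_drop nz //; li.
have hper' : forall k, k + p < L -> s (j' + k) = s (j' + k + p).
  by move=> k hk; rewrite -hsj -addnA -hsj addnA; apply: hper.
have pm : forall k, k < L -> s (j' + k) = s (j' + k %% p).
  apply: (permod (fun k => s (j' + k)) L p p0) => k hk /=.
  by rewrite addnA; apply: hper'.
have pL : p <= L by li.
exists x; split.
  exists (take j' z), (drop L (drop j' z)).
  by rewrite /x !cat_take_drop.
split; first by rewrite sx.
set n := L %/ p; set r := L %% p.
exists (n%:R + r%:R / (size (take p x))%:R)%R.
have sy : size (take p x) = p by rewrite size_takel // sx.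
split.
  rewrite sy; apply: betaok => //; rewrite /n /r -divn_eq; li.
exists (take p x), (take r (take p x)), n; split.
  by rewrite -size_eq0 sy -lt0n.
split; first exact: prefix_take.
have sr : size (take r (take p x)) = r by rewrite size_takel // sy /r ltnW // ltn_pmod.
split; last by rewrite sr.
apply: (fl p r (take p x) p0 sy); first by rewrite /r ltnW // ltn_pmod.
  by rewrite sx /n /r -divn_eq.
move=> k; rewrite sx => hk.
rewrite nth_take ?ltn_pmod // nx // nx; first exact: pm.
by apply: (leq_trans _ pL); rewrite ltn_pmod.
Qed.
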